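(* For every natural number $n \geq 2$, there exists a regular graph $G_n$ with $\chi(G_n) = n = \gamma(G_n)$.
   Context: All graphs are finite and simple; $\chi$ denotes chromatic number. A set $D \subseteq V(G)$ is a total dominating set of $G$ if every vertex of $V(G)$ is adjacent to some vertex of $D$. Define $\gamma(G) := \min\{\chi(G[D]) : D \text{ a total dominating set of } G\}$, where $G[D]$ is the subgraph induced by $D$. *)

(* Defs.v *)
From mathcomp Require Import all_boot.
Set Implicit Arguments. Unset Strict Implicit. Unset Printing Implicit Defensive.

Definition simple_graph (T : finType) (e : rel T) : Prop :=
  symmetric e /\ irreflexive e.

Definition regular (T : finType) (e : rel T) : Prop :=
  exists d : nat, forall x : T, #|[set y | e x y]| = d.

Definition colorable_on (T : finType) (e : rel T) (D : {set T}) (k : nat) : bool :=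
  [exists f : {ffun T -> 'I_k},
     [forall x in D, forall y in D, e x y ==> (f x != f y)]].

Definition chromatic_number_on (T : finType) (e : rel T) (D : {set T}) (k : nat) : Prop :=
  colorable_on e D k /\ forall j, j < k -> ~~ colorable_on e D j.

Definition chromatic_number (T : finType) (e : rel T) (k : nat) : Prop :=
  chromatic_number_on e [set: T] k.

Definition total_dominating (T : finType) (e : rel T) (D : {set T}) : Prop :=
  forall v : T, exists2 u, u \in D & e v u.

Definition gamma_is (T : finType) (e : rel T) (n : nat) : Prop :=
  (exists D : {set T}, total_dominating e D /\ chromatic_number_on e D n) /\
  (forall (D : {set T}) (k : nat),
      total_dominating e D -> chromatic_number_on e D k -> n <= k).

(* Main.v *)
Require Import Defs.
From mathcomp Require Import all_boot zify.
Set Implicit Arguments. Unset Strict Implicit. Unset Printing Implicit Defensive.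

Lemma card_ffun_fix (I J : finType) (c : I) (w : J) :
  #|[set g : {ffun I -> J} | g c == w]| = #|J| ^ #|I|.-1.
Proof.
pose F := fun x : I => if x == c then pred1 w else predT.
have -> : #|[set g : {ffun I -> J} | g c == w]| = #|(family F : simpl_pred _)|.
  apply: eq_card => g; rewrite inE; apply/idP/familyP => [/eqP Hg x|H].
    by rewrite /F; case: eqP => [->|]; rewrite inE ?Hg.
  by have := H c; rewrite /F eqxx inE.
rewrite card_family foldrE big_map big_enum /=.
rewrite (bigD1 c) //= /F eqxx card1 mul1n.
rewrite (eq_bigr (fun _ => #|J|)); last by move=> x /negbTE ->; apply: eq_card => y.
rewrite prod_nat_const cardC1 //.
Qed.

Lemma card_set_sum (T : finType) (P : pred T) : #|[set y | P y]| = \sum_y P y.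
Proof. by rewrite -sum1_card big_mkcond /=; apply: eq_bigr => y _; rewrite inE; case: (P y). Qed.

Lemma card_neq (T : finType) (i : T) : #|[set j : T | j != i]| = #|T|.-1.
Proof. by rewrite -(cardsC1 i); apply: eq_card => j; rewrite !inE. Qed.

Lemma card_set_cnst (T : finType) (b : bool) : \sum_(y : T) b = b * #|T|.
Proof. by case: b => /=; [rewrite sum1_card mul1n | rewrite big1]. Qed.

Lemma pigeon p (f : 'I_(p.+3) -> 'I_(p.+2)) :
  exists c0 j, forall c, c != c0 -> f c != j.
Proof.
have [j Hj] : exists j, #|[set c | f c == j]| <= 1.
  apply/existsP; apply: contraT; rewrite negb_exists => /forallP H.
  have H2 : \sum_(j : 'I_(p.+2)) 2 <= \sum_(j : 'I_(p.+2)) #|[set c | f c == j]|.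
    by apply: leq_sum => j _; have := H j; rewrite -ltnNge.
  have E : \sum_(j : 'I_(p.+2)) #|[set c | f c == j]| = p.+3.
    under eq_bigr do rewrite card_set_sum.
    rewrite exchange_big /=.
    rewrite (eq_bigr (fun _ => 1)); last first.
      move=> c _; rewrite -card_set_sum.
      by rewrite (_ : [set j | f c == j] = [set f c]) ?cards1 //; apply/setP => j; rewrite !inE eq_sym.
    by rewrite sum1_card card_ord.
  by move: H2; rewrite E big_const_ord iter_addn_0 => H3; lia.
case: (pickP (fun c => f c == j)) => [c0 Hc0 | Hn].
  exists c0, j => c Hc; apply/negP => Hcj.
  have : #|[set c; c0]| <= 1.
    apply: leq_trans Hj; apply: subset_leq_card; apply/subsetP => x.
    by rewrite !inE => /orP [] /eqP ->.
  by rewrite cards2 Hc.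
by exists ord0, j => c _; rewrite Hn.
Qed.

Section G.
Variable p : nat.
Definition mm := p.+2 * p.+1 * p.+1 ^ p.+2.
Lemma mm_gt0 : 0 < mm. Proof. rewrite /mm; lia. Qed.
Definition a0 : 'I_mm := Ordinal mm_gt0.
Definition Av := (('I_(p.+3) * 'I_(p.+2)) * 'I_mm)%type.
Definition Xv := (('I_(p.+3) * 'I_(p.+2)) * {ffun 'I_(p.+3) -> 'I_(p.+1)})%type.
Definition V := (Av + Xv)%type.
Definition adjAX (a : Av) (x : Xv) : bool :=
  (a.1.1 != x.1.1) && (unlift x.1.2 a.1.2 == Some (x.2 a.1.1)).
Definition edge : rel V := fun u v =>
  match u, v with
  | inl a, inl b => (a.1.1 == b.1.1) && (a.1.2 != b.1.2)
  | inl a, inr x => adjAX a x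
  | inr x, inl a => adjAX a x
  | inr _, inr _ => false
  end.

Lemma sumX (a : Av) : \sum_(x : Xv) adjAX a x = mm.
Proof.
have -> : \sum_(x : Xv) adjAX a x = \sum_(c0 : 'I_(p.+3)) \sum_(j : 'I_(p.+2)) \sum_g adjAX a ((c0, j), g).
  by rewrite pair_bigA pair_bigA; apply: eq_bigr => -[[]].
rewrite (eq_bigr (fun c0 => (a.1.1 != c0) * (p.+1 * p.+1 ^ p.+2))); last first.
  move=> c0 _.
  rewrite (eq_bigr (fun j => (a.1.1 != c0) * ((j != a.1.2) * p.+1 ^ p.+2))); last first.
    move=> j _; rewrite /adjAX /=.
    case: (a.1.1 != c0) => /=; last by rewrite big1.
    case: unliftP => [w ->|->]; last by rewrite eqxx big1.
    rewrite neq_lift mul1n -card_set_sum.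
    rewrite (_ : p.+1 ^ p.+2 = #|[set g : {ffun _ -> _} | g a.1.1 == w]|); last by rewrite card_ffun_fix !card_ord.
    rewrite mul1n; by apply: eq_card => g; rewrite !inE eq_sym.
  rewrite -big_distrr /= -big_distrl /=.
  congr (_ * (_ * _)).
  by rewrite -card_set_sum card_neq card_ord.
rewrite -big_distrl /= -card_set_sum.
rewrite (_ : [set c0 | a.1.1 != c0] = [set c0 | c0 != a.1.1]); last by apply/setP => c; rewrite !inE eq_sym.
by rewrite card_neq card_ord /mm mulnA.
Qed.

Lemma sumA (x : Xv) : \sum_(a : Av) adjAX a x = p.+2 * mm.
Proof.
have -> : \sum_(a : Av) adjAX a x = \sum_(c : 'I_(p.+3)) \sum_(i : 'I_(p.+2)) \sum_(b : 'I_mm) adjAX ((c, i), b) x.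
  by rewrite pair_bigA pair_bigA; apply: eq_bigr => -[[]].
rewrite (eq_bigr (fun c => (c != x.1.1) * mm)); last first.
  move=> c _; rewrite /adjAX /=.
  case: (c != x.1.1) => /=; last by rewrite big1 // => i _; rewrite big1.
  rewrite (eq_bigr (fun i => (i == lift x.1.2 (x.2 c)) * mm)); last first.
    move=> i _; rewrite card_set_cnst card_ord; congr (_ * _).
    case: unliftP => [w ->|->]; last by rewrite (negbTE (neq_lift _ _)).
    by rewrite (inj_eq (@lift_inj _ _)) (inj_eq (@Some_inj _)).
  rewrite -big_distrl /= -card_set_sum.
  by rewrite (_ : [set i | i == _] = [set lift x.1.2 (x.2 c)]) ?cards1 ?mul1n //; apply/setP => i; rewrite !inE.
by rewrite -big_distrl /= -card_set_sum card_neq card_ord.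
Qed.

Lemma edge_sym : symmetric edge.
Proof. by move=> [a|x] [b|y] //=; rewrite eq_sym [a.1.2 == _]eq_sym. Qed.

Lemma edge_irr : irreflexive edge.
Proof. by case=> [a|x]; rewrite /edge ?eqxx. Qed.

Lemma deg (v : V) : #|[set y | edge v y]| = p.+2 * mm.
Proof.
rewrite card_set_sum big_sumType /=.
case: v => [a|x] /=.
  rewrite sumX -card_set_sum.
  rewrite (_ : [set y : Av | (a.1.1 == y.1.1) && (a.1.2 != y.1.2)] =
     setX (setX [set a.1.1] [set i | i != a.1.2]) [set: 'I_mm]); last first.
    apply/setP => -[[c i] b]; rewrite !inE /= eq_sym [i == _]eq_sym andbT //.
  by rewrite !cardsX cards1 card_neq cardsT !card_ord mul1n mulSn addnC.
by rewrite sumA big1 ?addn0.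
Qed.

Lemma adjAX_neq a x : adjAX a x -> a.1.2 != x.1.2.
Proof.
rewrite /adjAX => /andP [_]; apply: contraTneq => ->.
by rewrite unlift_none.
Qed.

Lemma col_ok : colorable_on edge [set: V] p.+2.
Proof.
apply/existsP; exists [ffun v => match v with inl a => a.1.2 | inr x => x.1.2 end].
apply/forall_inP => u _; apply/forall_inP => v _; rewrite !ffunE.
case: u v => [a|x] [b|y] //=; apply/implyP; first by case/andP.
  exact: adjAX_neq.
by move/adjAX_neq; rewrite eq_sym.
Qed.

Lemma clique (D : {set V}) c (af : 'I_(p.+2) -> 'I_mm) k :
  (forall i, inl ((c, i), af i) \in D) -> colorable_on edge D k -> p.+2 <= k.
Proof.
move=> HD /existsP [f /forall_inP H].
pose h i := f (inl ((c, i), af i)).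
have hinj : injective h.
  move=> i i' Hii; apply/eqP; apply: contraT => Hne.
  move/forall_inP: (H _ (HD i)) => /(_ _ (HD i')) /=.
  by rewrite eqxx Hne /= -/(h i) -/(h i') Hii eqxx.
by have := @leq_card _ _ h hinj; rewrite !card_ord.
Qed.

Lemma chi_ok : chromatic_number_on edge [set: V] p.+2.
Proof.
split; first exact: col_ok.
move=> j Hj; apply/negP => Hc.
have := clique (c := ord0) (af := fun _ => a0) (fun i => in_setT _) Hc.
by rewrite leqNgt Hj.
Qed.

Lemma tds_T : total_dominating edge [set: V].
Proof.
move=> [a|x].
  by exists (inl ((a.1.1, lift a.1.2 ord0), a.2)); rewrite ?in_setT //= eqxx neq_lift.
exists (inl ((lift x.1.1 ord0, lift x.1.2 (x.2 (lift x.1.1 ord0))), a0)); rewrite ?in_setT //=.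
by rewrite /adjAX /= eq_sym neq_lift liftK eqxx.
Qed.

Lemma gamma_lb (D : {set V}) k :
  total_dominating edge D -> chromatic_number_on edge D k -> p.+2 <= k.
Proof.
move=> HT [Hc _].
case: (boolP [forall c, exists i, forall b, inl ((c, i), b) \notin D]) => Hb.
  have /fin_all_exists [f Hf] : forall c : 'I_(p.+3), exists i, forall b, inl ((c, i), b) \notin D.
    by move=> c; move/forallP: Hb => /(_ c) /existsP [i /forallP Hi]; exists i.
  have [c0 [j Hcj]] := pigeon f.
  pose g : {ffun 'I_(p.+3) -> 'I_(p.+1)} := [ffun c => odflt ord0 (unlift j (f c))].
  have [[u|y] uD] := HT (inr ((c0, j), g)); last by [].
  rewrite /= /adjAX /= => /andP [Hu1 Hu2].
  have := Hcj _ Hu1; have := Hf u.1.1 u.2; move: Hu2; rewrite /g ffunE.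
  case: (unliftP j (f u.1.1)) => [w Hw|->]; last by rewrite eqxx.
  case: (unliftP j u.1.2) => [w' Hw'|_] //.
  move/eqP => [Ew] Hn _; case/negP: Hn.
  rewrite Hw -Ew -Hw'; move: uD; clear.
  by case: u => -[c i] b.
move: Hb; rewrite negb_forall => /existsP [c]; rewrite negb_exists => /forallP Hc'.
have /fin_all_exists [af Haf] : forall i : 'I_(p.+2), exists b, inl ((c, i), b) \in D.
  move=> i; move: (Hc' i); rewrite negb_forall => /existsP [b]; rewrite negbK.
  by exists b.
exact: clique Haf Hc.
Qed.

End G.

Theorem theorem1p4 :
  forall n : nat, 2 <= n ->
  exists (T : finType) (e : rel T),
    [/\ simple_graph e, regular e, chromatic_number e n & gamma_is e n].
Proof.
move=> [|[|p]] // _.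
exists (V p), (@edge p); split.
- split; [exact: edge_sym | exact: edge_irr].
- by exists (p.+2 * mm p) => v; exact: deg.
- exact: chi_ok.
- split; first by exists [set: V p]; split; [exact: tds_T | exact: chi_ok].
  by move=> D k; exact: gamma_lb.
Qed.
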